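(* Let $C^0\subset\mathcal{L}^0$ be a set of pairwise disjoint lines on ${\rm F}_5$ with $\#C^0=5$. Then $\#\varphi_{5,+}(C^0)\ge3$ or $\#\varphi_{5,-}(C^0)\ge3$.
   Context: ${\rm F}_5\subset\mathbb{P}^3(\mathbb{C})$ is the surface $x^5-y^5-z^5+w^5=0$. Let $\eta$ be a primitive 5th root of unity. For $k,i\in\{0,\dots,4\}$ let $L^0_{k,i}$ be the line $\{y=\eta^i x,\ w=\eta^k z\}$ and $\mathcal{L}^0=\{L^0_{k,i}\}_{k,i}$. Define $\varphi_{5,\pm}(k,i)=r_5(i\pm k)$, where $r_5$ is the remainder modulo 5, and for a set $X$ of lines $L^0_{k,i}$ let $\varphi_{5,\pm}(X)$ be the set of values $\varphi_{5,\pm}(k,i)$ over $L^0_{k,i}\in X$. *)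

(* Defs.v *)
From mathcomp Require Import all_boot all_order all_algebra all_field.
Set Implicit Arguments. Unset Strict Implicit. Unset Printing Implicit Defensive.
Import GRing.Theory Num.Theory.
Local Open Scope ring_scope.

(* Points of P^3(C) are represented by nonzero coordinate vectors (x,y,z,w);
   complex numbers are modelled by algC. A line index is a pair (k,i). *)

Definition onF5 (x y z w : algC) : Prop :=
  x ^+ 5 - y ^+ 5 - z ^+ 5 + w ^+ 5 = 0.

(* (x,y,z,w) lies on the line L^0_{k,i} = {y = eta^i x, w = eta^k z} *)
Definition onL0 (eta : algC) (ki : 'I_5 * 'I_5) (x y z w : algC) : Prop :=
  y = eta ^+ ki.2 * x /\ w = eta ^+ ki.1 * z.

Definition lines_disjoint (eta : algC) (p q : 'I_5 * 'I_5) : Prop :=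
  forall x y z w : algC, onL0 eta p x y z w -> onL0 eta q x y z w ->
    [/\ x = 0, y = 0, z = 0 & w = 0].

(* phi_{5,+}(k,i) = r_5(i+k),  phi_{5,-}(k,i) = r_5(i-k) *)
Definition phi5p (ki : 'I_5 * 'I_5) : nat := ((ki.2 + ki.1) %% 5)%N.
Definition phi5m (ki : 'I_5 * 'I_5) : nat := ((ki.2 + (5 - ki.1)) %% 5)%N.

(* Main.v *)
Require Import Defs.
From mathcomp Require Import all_boot all_order all_algebra all_field.
Local Open Scope ring_scope.
Import GRing.Theory.

Definition g3 (h : nat -> nat -> nat) (s : seq nat) :=
  has (fun a => has (fun b => has (fun c =>
     [&& h a (nth 0%N s a) != h b (nth 0%N s b), h a (nth 0%N s a) != h c (nth 0%N s c)
       & h b (nth 0%N s b) != h c (nth 0%N s c)]) (iota 0 5)) (iota 0 5)) (iota 0 5).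
Definition pp (a b : nat) := ((b + a) %% 5)%N.
Definition pm (a b : nat) := ((b + (5 - a)) %% 5)%N.
Lemma allf : all (fun s => g3 pp s || g3 pm s) (permutations (iota 0 5)) = true.
Proof. vm_compute. reflexivity. Qed.

Lemma three_le (T : eqType) (h : T -> nat) (s : seq T) a b c :
  a \in s -> b \in s -> c \in s -> h a != h b -> h a != h c -> h b != h c ->
  (3 <= size (undup (map h s)))%N.
Proof.
move=> ha hb hc nab nac nbc.
have sub : {subset [:: h a; h b; h c] <= undup (map h s)}.
  move=> x; rewrite !inE mem_undup => /or3P [] /eqP ->; exact: map_f.
apply: (uniq_leq_size _ sub).
by rewrite /= !inE negb_or nab nac nbc.
Qed.

Lemma g3_ex h s : g3 h s -> exists a b c, [/\ (a < 5)%N, (b < 5)%N, (c < 5)%N &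
  [&& h a (nth 0%N s a) != h b (nth 0%N s b), h a (nth 0%N s a) != h c (nth 0%N s c)
       & h b (nth 0%N s b) != h c (nth 0%N s c)]].
Proof.
move=> /hasP [a]; rewrite mem_iota => /andP [_ ha] /hasP [b]; rewrite mem_iota => /andP [_ hb].
move=> /hasP [c]; rewrite mem_iota => /andP [_ hc] H.
by exists a, b, c; split.
Qed.

Theorem lemma3p3 (eta : algC) (Heta : 5.-primitive_root eta)
  (C0 : {set 'I_5 * 'I_5}) :
  #|C0| = 5%N ->
  (forall p q, p \in C0 -> q \in C0 -> p != q -> lines_disjoint eta p q) ->
  (3 <= size (undup [seq phi5p p | p <- enum C0]))%N \/ (3 <= size (undup [seq phi5m p | p <- enum C0]))%N.
Proof.
move=> hcard hdis.
have d1 : forall p q, p \in C0 -> q \in C0 -> p.1 = q.1 -> p = q.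
  move=> p q hp hq e; apply/eqP; apply/negPn/negP => npq.
  have L1 : onL0 eta p 0 0 1 (eta ^+ p.1) by rewrite /onL0 mulr0 mulr1.
  have L2 : onL0 eta q 0 0 1 (eta ^+ p.1) by rewrite /onL0 mulr0 mulr1 e.
  have [_ _ h _] := hdis p q hp hq npq _ _ _ _ L1 L2.
  by move: h; apply/eqP; rewrite oner_eq0.
have d2 : forall p q, p \in C0 -> q \in C0 -> p.2 = q.2 -> p = q.
  move=> p q hp hq e; apply/eqP; apply/negPn/negP => npq.
  have L1 : onL0 eta p 1 (eta ^+ p.2) 0 0 by rewrite /onL0 mulr0 mulr1.
  have L2 : onL0 eta q 1 (eta ^+ p.2) 0 0 by rewrite /onL0 mulr0 mulr1 e.
  have [h _ _ _] := hdis p q hp hq npq _ _ _ _ L1 L2.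
  by move: h; apply/eqP; rewrite oner_eq0.
have surj : forall k : 'I_5, exists2 p, p \in C0 & p.1 == k.
  have ci : #|[set p.1 | p in C0]| = 5%N.
    rewrite card_in_imset ?hcard // => p q hp hq; exact: d1.
  have eT : [set p.1 | p in C0] = setT.
    apply/eqP; rewrite eqEcard subsetT cardsT card_ord ci //.
  move=> k; have : k \in [set p.1 | p in C0] by rewrite eT inE.
  by case/imsetP => p hp ->; exists p.
pose f (k : 'I_5) := (odflt (k, k) [pick p in C0 | p.1 == k]).2.
have fC : forall k, (k, f k) \in C0.
  move=> k; rewrite /f; case: pickP => [p /andP [hp /eqP <-] /=|].
    by rewrite -surjective_pairing.
  by have [p hp hk] := surj k => /(_ p); rewrite hp hk.
have finj : injective f.
  move=> a b e.
  have := d2 _ _ (fC a) (fC b) e; by case.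
pose s := map (fun k => nat_of_ord (f (inord k))) (iota 0 5).
have us : uniq s.
  rewrite map_inj_in_uniq ?iota_uniq // => a b; rewrite !mem_iota /= => ha hb e.
  by move: (finj _ _ (val_inj e)) => /(congr1 val); rewrite /= !inordK.
have ps : perm_eq s (iota 0 5).
  have sub : {subset s <= iota 0 5}.
    move=> x /mapP [k _ ->]; by rewrite mem_iota /= ltn_ord.
  have [_ hs] := uniq_min_size us sub (leqnn 5).
  by apply: uniq_perm => //; exact: iota_uniq.
have := allf; move/allP => /(_ s); rewrite mem_permutations ps => /(_ isT).
have ns : forall a, (a < 5)%N -> nth 0%N s a = f (inord a).
  by move=> a ha; rewrite (nth_map 0%N) ?size_iota // nth_iota.
have mC : forall a, (a < 5)%N -> ((inord a : 'I_5), f (inord a)) \in enum C0.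
  by move=> a _; rewrite mem_enum.
have iv : forall a, (a < 5)%N -> nat_of_ord (inord a : 'I_5) = a.
  by move=> a ha; rewrite inordK.
case/orP => /g3_ex [a [b [c [ha hb hc /and3P [n1 n2 n3]]]]]; [left|right].
  apply: (@three_le _ phi5p _ _ _ _ (mC a ha) (mC b hb) (mC c hc));
  by rewrite /phi5p /= ?iv // -?ns.
apply: (@three_le _ phi5m _ _ _ _ (mC a ha) (mC b hb) (mC c hc));
by rewrite /phi5m /= ?iv // -?ns.
Qed.
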